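(* Let $k\ge 3$ be an integer. Then the $(6k^2-6k-1)$-fan $F_{6k^2-6k-1}$ satisfies $\mathrm{ecrw}(F_{6k^2-6k-1})\ge k$.
   Context: The $n$-fan $F_n$ is the graph obtained from the path on $n$ vertices by adding one new vertex adjacent to all vertices of the path. A tree-cut decomposition of a graph $G$ is a pair $\mathcal{T}=(T,\{X_t\}_{t\in V(T)})$ where $T$ is a tree and the bags $X_t\subseteq V(G)$ are pairwise disjoint (possibly empty) with $\bigcup_{t\in V(T)}X_t=V(G)$. For a node $t$ of $T$, let $T_1,\dots,T_m$ be the connected components of $T-t$ and $Z_i=\bigcup_{s\in V(T_i)}X_s$; $\mathrm{cross}_{\mathcal{T}}(t)$ is the number of edges of $G$ whose two endpoints lie in two distinct sets among $Z_1,\dots,Z_m$ (if $T$ has one node, $\mathrm{cross}_{\mathcal T}(t)=0$). The crossing number of $\mathcal{T}$ is $\max_{t}\mathrm{cross}_{\mathcal{T}}(t)$, and the thickness of $\mathcal{T}$ is $\max_t|X_t|$. The edge-crossing width of $\mathcal T$ is the maximum of its crossing number and its thickness, and $\mathrm{ecrw}(G)$ is the minimum edge-crossing width over all tree-cut decompositions of $G$. *)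

(* Defs.v *)
From mathcomp Require Import all_boot.
Set Implicit Arguments. Unset Strict Implicit. Unset Printing Implicit Defensive.

Definition simple_graph (V : finType) (g : rel V) : Prop :=
  symmetric g /\ irreflexive g.

(* The n-fan F_n: path vertices 0,...,n-1 (i ~ i+1), plus apex vertex n
   adjacent to all path vertices. Vertex type 'I_n.+1. *)
Definition fan_rel (n : nat) : rel 'I_n.+1 :=
  fun u v => (u != v) &&
    [|| (u == n :> nat), (v == n :> nat), (u.+1 == v :> nat) | (v.+1 == u :> nat)].

Arguments fan_rel n : clear implicits.

Definition is_tree (T : finType) (e : rel T) : Prop :=
  [/\ symmetric e, irreflexive e, (0 < #|T|)%N,
      (forall x y, connect e x y) &
      (forall u v, e u v ->
         ~~ connect (fun a b => e a b && ~~ ((a == u) && (b == v) || (a == v) && (b == u))) u v)].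

Record tcd (V : finType) (g : rel V) := TCD {
  tnode : finType;
  tedge : rel tnode;
  bag : tnode -> {set V};
  tcd_tree : is_tree tedge;
  tcd_disj : forall s t, s != t -> [disjoint bag s & bag t];
  tcd_cover : forall v, exists t, v \in bag t
}.

Definition same_comp V g (D : @tcd V g) (t s1 s2 : tnode D) : bool :=
  connect (fun a b => tedge a b && (a != t) && (b != t)) s1 s2.

Definition crosses_at V g (D : @tcd V g) (t : tnode D) (u v : V) : bool :=
  [exists s1, exists s2,
     [&& u \in bag s1, v \in bag s2, s1 != t, s2 != t & ~~ same_comp t s1 s2]].

Definition cross V g (D : @tcd V g) (t : tnode D) : nat :=
  #|[set E : {set V} | [exists u, exists v,
        [&& E == [set u; v], g u v & crosses_at t u v]]]|.

Definition ecw V g (D : @tcd V g) : nat :=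
  \max_(t : tnode D) maxn (cross t) #|@bag _ _ D t|.

Definition ecrw_ge (V : finType) (g : rel V) (k : nat) : Prop :=
  forall D : @tcd V g, (k <= ecw D)%N.

(* Main.v *)
Require Import Defs.
From mathcomp Require Import all_boot.
From mathcomp Require Import zify.

Lemma first_nb (T : finType) (e : rel T) (P : pred T) (ta s : T) :
  connect (fun a b => e a b && P a && P b) s ta -> s != ta ->
  exists2 t', e t' ta & P t' && connect (fun a b => e a b && (a != ta) && (b != ta)) s t'.
Proof.
move/connectP=> [p]; elim: p s => [|x p IH] s /=.
  by move=> _ ->; rewrite eqxx.
move=> /andP[/andP[/andP[esx Ps] Px] pth] lst sneq.
case: (eqVneq x ta) => [xta|xneq].
  by exists s; [rewrite -xta | rewrite Ps connect0].
have [t' e' /andP[Pt' c]] := IH x pth lst xneq.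
exists t' => //; rewrite Pt' /=.
apply: connect_trans c; apply: connect1.
by rewrite esx sneq xneq.
Qed.

Lemma no_cycle (T : finType) (e : rel T) (ta t t' : T) :
  is_tree e -> e t ta -> e t' ta -> t != t' ->
  connect (fun a b => e a b && (a != ta) && (b != ta)) t t' -> False.
Proof.
case=> sym irr _ _ minc ett ett' ntt' c.
have := minc t ta ett; apply/negP/negPn.
apply: connect_trans (_ : connect _ t' ta).
  apply: connect_sub c => x y /andP[/andP[exy xn] yn]; apply: connect1.
  by rewrite exy /= (negbTE yn) (negbTE xn) !andbF.
apply: connect1; rewrite ett' /= (eq_sym t') (negbTE ntt') /=.
have -> : (t' == ta) = false by apply/negP=> /eqP E; move: ett'; rewrite E irr.
by [].
Qed.

Lemma cross_ge (V : finType) (g : rel V) (D : tcd g) (t : tnode D)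
  (X : finType) (A : {set X}) (f : X -> {set V}) :
  {in A &, injective f} ->
  (forall x, x \in A -> exists u v, [/\ f x = [set u; v], g u v & crosses_at t u v]) ->
  #|A| <= cross t.
Proof.
move=> inj H; rewrite -(card_in_imset inj); apply: subset_leq_card.
apply/subsetP => E /imsetP[x xA ->]; rewrite inE.
have [u [v [fe guv cr]]] := H x xA.
by apply/existsP; exists u; apply/existsP; exists v; rewrite fe eqxx guv cr.
Qed.

Lemma main (n K : nat) (D : tcd (fan_rel n)) :
  0 < K -> (3*K+1)*(2*K+1) <= n -> K < ecw D.
Proof.
move=> K0 Hn; rewrite ltnNge; apply/negP => Hle.
have Hb (t : tnode D) : cross t <= K /\ #|bag t| <= K.
  have := leq_trans (@leq_bigmax _ (fun t => maxn (cross t) #|@bag _ _ D t|) t) Hle.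
  by rewrite geq_max => /andP[].
have [sym irr _ conn minc] := tcd_tree D.
have Htree := tcd_tree D.
pose a : 'I_n.+1 := ord_max.
have [ta aIn] := tcd_cover D a.
pose node (v : 'I_n.+1) := odflt ta [pick t : tnode D | v \in bag t].
have node_in v : v \in bag (node v).
  rewrite /node; case: pickP => [t //|none] /=.
  by have [t vt] := tcd_cover D v; move: (none t); rewrite vt.
have node_uniq v s : v \in bag s -> node v = s.
  move=> vs; apply/eqP/negPn/negP => ne.
  by have := disjointFr (tcd_disj ne) (node_in v); rewrite vs.
have nodea : node a = ta by apply: node_uniq.
have scsym (t : tnode D) : connect_sym (fun a b => tedge a b && (a != t) && (b != t)).
  apply: sym_connect_sym => x y; by rewrite sym andbAC andbC andbA.
have gaE v : v != a -> fan_rel n a v.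
  move=> vna; rewrite /fan_rel eq_sym vna /=.
  by rewrite eqxx.
pose S t := [set v | (node v != ta) && same_comp ta (node v) t].
have Sbound (t : tnode D) : tedge t ta -> #|S t| <= K + K.
  move=> etta.
  have tnta : t != ta by apply/negP => /eqP E; move: etta; rewrite E irr.
  pose W := [set v | (v != a) && (node v != t) && ~~ same_comp t (node v) ta].
  have HW : #|W| <= K.
    apply: leq_trans (proj1 (Hb t)).
    apply: (@cross_ge _ _ D t _ W (fun v => [set a; v])).
      move=> v w; rewrite !inE => /andP[/andP[va _] _] /andP[/andP[wa _] _] E.
      have : v \in [set a; w] by rewrite -E set22.
      by rewrite in_set2 (negbTE va) => /eqP.
    move=> v; rewrite inE => /andP[/andP[va vt] nsc].
    exists a, v; split => //; first exact: gaE.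
    apply/existsP; exists ta; apply/existsP; exists (node v).
    rewrite aIn node_in (eq_sym ta) tnta vt /=.
    by rewrite /same_comp scsym.
  have sub : S t \subset bag t :|: W.
    apply/subsetP => v; rewrite !inE => /andP[nv sc].
    case vt: (v \in bag t) => //=.
    have nvt : node v != t by apply/negP => /eqP E; move: (node_in v); rewrite E vt.
    have va : v != a by apply/negP => /eqP E; move: nv; rewrite E nodea eqxx.
    rewrite va nvt /=; apply/negP => c.
    have [t' et' /andP[t't c']] := @first_nb _ _ (fun x => x != t) ta (node v) c nv.
    have ntt' : t != t' by rewrite eq_sym.
    apply: (@no_cycle _ _ ta t t' Htree etta et' ntt').
    apply: connect_trans c'.
    by rewrite scsym.
  apply: leq_trans (subset_leq_card sub) _.
  apply: leq_trans (leq_card_setU _ _).1 _.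
  by apply: leq_add; [exact: (proj2 (Hb t)) | exact: HW].
pose vtx (i : nat) : 'I_n.+1 := inord i.
have vtxK m : m < n.+1 -> (vtx m : nat) = m by move=> h; rewrite /vtx inordK.
pose brk i := [|| vtx i \in bag ta, vtx i.+1 \in bag ta |
                 ~~ same_comp ta (node (vtx i)) (node (vtx i.+1))].
pose Br := [set i : 'I_n.+1 | (i.+1 < n) && brk i].
have Brbound : #|Br| <= K + K + K.
  pose B2 := [set i : 'I_n.+1 | (i.+1 < n) && (vtx i.+1 \in bag ta)].
  pose B3 := [set i : 'I_n.+1 | [&& i.+1 < n, vtx i \notin bag ta, vtx i.+1 \notin bag ta &
                 ~~ same_comp ta (node (vtx i)) (node (vtx i.+1))]].
  have sub : Br \subset bag ta :|: B2 :|: B3.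
    apply/subsetP => i; rewrite !inE => /andP[hi].
    have vi : vtx i = i by apply: val_inj; rewrite /= vtxK.
    rewrite /brk vi hi /=.
    by case: (i \in bag ta); case: (vtx i.+1 \in bag ta).
  have H2 : #|B2| <= K.
    apply: leq_trans (proj2 (Hb ta)).
    have inj : {in B2 &, injective (fun i : 'I_n.+1 => vtx i.+1)}.
      move=> i j; rewrite !inE => /andP[hi _] /andP[hj _] E.
      apply: val_inj; have := congr1 val E; rewrite /= !vtxK; lia.
    rewrite -(card_in_imset inj); apply: subset_leq_card.
    by apply/subsetP => v /imsetP[i]; rewrite inE => /andP[_ h] ->.
  have H3 : #|B3| <= K.
    apply: leq_trans (proj1 (Hb ta)).
    apply: (@cross_ge _ _ D ta _ B3 (fun i => [set vtx i; vtx i.+1])).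
      move=> i j; rewrite !inE => /and4P[hi _ _ _] /and4P[hj _ _ _] E.
      have h1 : vtx i \in [set vtx j; vtx j.+1] by rewrite -E set21.
      have h2 : vtx j \in [set vtx i; vtx i.+1] by rewrite E set21.
      move: h1 h2; rewrite !in_set2 => /orP[] /eqP /(congr1 val) h1 /orP[] /eqP /(congr1 val) h2;
        apply: val_inj; move: h1 h2; rewrite /= !vtxK; lia.
    move=> i; rewrite inE => /and4P[hi ni ni1 nsc].
    exists (vtx i), (vtx i.+1); split => //.
      rewrite /fan_rel; apply/andP; split.
        by apply/negP => /eqP /(congr1 val); rewrite /= !vtxK; lia.
      by rewrite !vtxK ?eqxx ?orbT //; lia.
    apply/existsP; exists (node (vtx i)); apply/existsP; exists (node (vtx i.+1)).
    rewrite !node_in nsc /= andbT; apply/andP; split.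
      by apply/negP => /eqP E; move: (node_in (vtx i)); rewrite E (negbTE ni).
    by apply/negP => /eqP E; move: (node_in (vtx i.+1)); rewrite E (negbTE ni1).
  apply: leq_trans (subset_leq_card sub) _.
  apply: leq_trans (leq_card_setU _ _).1 _.
  apply: leq_add H3.
  apply: leq_trans (leq_card_setU _ _).1 _.
  by apply: leq_add H2; exact: (proj2 (Hb ta)).
pose L := (2*K+1).
have L0 : 0 < L by rewrite /L addn1.
have win j : j < 3*K+1 -> [exists i in Br, i %/ L == j].
  move=> hj; apply: contraT => /existsPn H.
  have hjL : j.+1 * L <= n by apply: leq_trans Hn; rewrite leq_mul2r hj orbT.
  rewrite mulSn in hjL.
  have nobrk r : r < 2*K -> ~~ brk (j*L + r).
    move=> hr; have hlt : j*L + r < n.+1 by lia.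
    have := H (Ordinal hlt); rewrite inE /= divnMDl // divn_small; last by lia.
    rewrite addn0 eqxx andbT negb_and; have -> : (j*L + r).+1 < n by lia.
    by [].
  have run r : r <= 2*K -> (vtx (j*L + r) \notin bag ta) &&
                  same_comp ta (node (vtx (j*L))) (node (vtx (j*L + r))).
    elim: r => [|r IH] hr.
      have := nobrk 0 ltac:(lia); rewrite /brk addn0 !negb_or => /and3P[-> _ _].
      by rewrite /same_comp connect0.
    have /andP[_ c] := IH (ltnW hr).
    have := nobrk r ltac:(lia); rewrite /brk !negb_or negbK addnS => /and3P[_ -> c2].
    by apply: connect_trans c2.
  have /andP[n0 _] := run 0 (leq0n _).
  rewrite addn0 in n0.
  have nn0 : node (vtx (j*L)) != ta.
    by apply/negP => /eqP E; move: (node_in (vtx (j*L))); rewrite E (negbTE n0).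
  have c0 : connect (fun x y => tedge x y && predT x && predT y) (node (vtx (j*L))) ta.
    apply: connect_sub (conn _ ta) => x y exy; apply: connect1; by rewrite /= exy.
  have [t et /andP[_ ct]] := @first_nb _ _ predT ta _ c0 nn0.
  have := Sbound t et.
  have inj : injective (fun r : 'I_L => vtx (j*L + r)).
    move=> r1 r2 E; apply: val_inj; have := congr1 val E.
    have := ltn_ord r1; have := ltn_ord r2; move=> l1 l2; rewrite /= !vtxK; lia.
  have sub : [set vtx (j*L + r) | r : 'I_L] \subset S t.
    apply/subsetP => v /imsetP[r _ ->]; rewrite inE.
    have /andP[nr cr] := run r ltac:(have := ltn_ord r; lia).
    apply/andP; split.
      by apply/negP => /eqP E; move: (node_in (vtx (j*L + r))); rewrite E (negbTE nr).
    rewrite /same_comp scsym in cr.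
    by apply: connect_trans cr ct.
  have := subset_leq_card sub; rewrite card_imset // card_ord.
  move=> h1 h2; have := leq_trans h1 h2; rewrite /L; lia.
pose h (j : 'I_(3*K+1)) : 'I_n.+1 := odflt ord0 [pick i in Br | i %/ L == j].
have hP j : (h j \in Br) && (h j %/ L == j).
  rewrite /h; case: pickP => [i /andP[-> ->] //|none].
  have /exists_inP[i iB /eqP ij] := win j (ltn_ord j).
  by move: (none i); rewrite iB ij eqxx.
have hinj : injective h.
  move=> j1 j2 E; apply: val_inj.
  have /andP[_ /eqP e1] := hP j1; have /andP[_ /eqP e2] := hP j2.
  by rewrite /= -e1 -e2 E.
have : #|[set h j | j in [set: 'I_(3*K+1)]]| <= #|Br|.
  apply: subset_leq_card; apply/subsetP => x /imsetP[j _ ->].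
  by have /andP[] := hP j.
rewrite card_imset // cardsT card_ord => hh.
have := leq_trans hh Brbound; lia.
Qed.

Theorem lemma3p16 (k : nat) (hk : (3 <= k)%N) :
  ecrw_ge (fan_rel (6 * k ^ 2 - 6 * k - 1)) k.
Proof.
move=> D; move: hk D; case: k => [|K] // hK D.
apply: main; first by lia.
nia.
Qed.
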